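(* Let $k\ge1$ and let $A_k$ be the matrix defined below. The reduced Gröbner basis of the toric ideal $I_{A_k}$ with respect to the lexicographic term ordering $\prec_{\mathrm{lex}}$ is $\{\mathbf{x}^{\mathbf{u}^+}-\mathbf{x}^{\mathbf{u}^-}:\mathbf{u}\in\mathcal{R}\}$, where $\mathcal{R}$ consists of the vector $(\mathbf{0}_k,\mathbf{1}_k,\mathbf{0}_k,-\mathbf{1}_k,1,-1)^{\mathsf T}$ together with the vectors $(\mathbf{e}_i,-\mathbf{e}_i,\mathbf{0}_k,\mathbf{0}_k,0,0)^{\mathsf T}$ and $(\mathbf{0}_k,\mathbf{0}_k,\mathbf{e}_i,-\mathbf{e}_i,0,0)^{\mathsf T}$ for $i\in[k]$ (here $\mathbf{e}_i$ are the standard unit vectors of $\mathbb{Z}^k$).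
   Context: $I_k$ is the $k\times k$ identity, $\mathbf{1}_k$ the all-ones and $\mathbf{0}_k$ the zero vector in $\mathbb{Z}^k$. Define $$A_k=\begin{pmatrix} I_k & I_k & 0 & 0 & -\mathbf{1}_k & \mathbf{0}\\ 0&0&I_k&I_k&\mathbf{0}&-\mathbf{1}_k\\ 0&0&0&0&1&1\end{pmatrix}\in\mathbb{Z}^{(2k+1)\times(4k+2)}$$ (zero blocks of appropriate sizes; last two columns are single columns). The toric ideal of $A\in\mathbb{Z}^{d\times n}$ is $I_A=\langle\mathbf{x}^{\mathbf{u}^+}-\mathbf{x}^{\mathbf{u}^-}:\mathbf{u}\in\ker(A)\cap\mathbb{Z}^n\rangle\subset K[x_1,\dots,x_n]$, with $\mathbf{u}^+,\mathbf{u}^-\in\mathbb{Z}^n_{\ge0}$ the positive and negative parts of $\mathbf{u}$. The lexicographic order on monomials (identified with exponent vectors in $\mathbb{Z}^n_{\ge0}$): $\mathbf{u}\prec_{\mathrm{lex}}\mathbf{v}$ iff $u_i<v_i$ for the smallest index $i$ with $u_i\neq v_i$. *)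

(* Defs.v *)
From HB Require Import structures.
From mathcomp Require Import all_boot all_order all_algebra.
From mathcomp Require Import mpoly.
Set Implicit Arguments. Unset Strict Implicit. Unset Printing Implicit Defensive.
Import Order.TTheory GRing.Theory Num.Theory.
Local Open Scope ring_scope.

(* Number of variables/columns: 4k+2.  Indices are 0-based: variable x_{j+1}
   of the paper is index j : 'I_(ncols k). *)
Definition ncols (k : nat) : nat := (4 * k).+2.

Definition Amat (k : nat) : 'M[int]_((2 * k).+1, ncols k) :=
  \matrix_(i, j)
    (if (j < 4 * k)%N then
       (if (j < 2 * k)%N then
          (if ((i < k)%N && (j %% k == nat_of_ord i)%N) then 1 else 0)
        else
          (if ((k <= i)%N && (i < 2 * k)%N && ((j %% k)%N == (i - k)%N)) then 1 else 0))
     else if (nat_of_ord j == 4 * k)%N then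
       (if (i < k)%N then -1 else if (nat_of_ord i == 2 * k)%N then 1 else 0)
     else
       (if ((k <= i)%N && (i < 2 * k)%N) then -1 else if (nat_of_ord i == 2 * k)%N then 1 else 0)).

Definition upos (n : nat) (u : 'cV[int]_n) : 'X_{1..n} :=
  [multinom (if (0 <= u i ord0)%R then absz (u i ord0) else 0) | i < n].
Definition uneg (n : nat) (u : 'cV[int]_n) : 'X_{1..n} :=
  [multinom (if (u i ord0 <= 0)%R then absz (u i ord0) else 0) | i < n].

Definition binom (K : fieldType) (n : nat) (u : 'cV[int]_n) : {mpoly K[n]} :=
  'X_[upos u] - 'X_[uneg u].

Definition toric_ideal (K : fieldType) (d n : nat) (A : 'M[int]_(d, n))
    (f : {mpoly K[n]}) : Prop :=
  exists s : seq ({mpoly K[n]} * 'cV[int]_n),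
    (forall p, p \in s -> A *m p.2 = 0) /\
    f = \sum_(p <- s) p.1 * @binom K _ p.2.

Definition lexlt (n : nat) (m m' : 'X_{1..n}) : bool :=
  [exists i : 'I_n, (m i < m' i)%N &&
     [forall j : 'I_n, (j < i)%N ==> (m j == m' j)]].

(* leading monomial w.r.t. lex (the lex-largest monomial in the support;
   0 for the zero polynomial) *)
Definition lexmax (n : nat) (m m' : 'X_{1..n}) : 'X_{1..n} :=
  if lexlt m m' then m' else m.
Definition lm (K : fieldType) (n : nat) (p : {mpoly K[n]}) : 'X_{1..n} :=
  foldr (@lexmax n) 0%MM (msupp p).

Definition mdivides (n : nat) (m m' : 'X_{1..n}) : bool :=
  [forall i : 'I_n, (m i <= m' i)%N].

Definition is_reduced_lex_GB (K : fieldType) (n : nat)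
    (I : {mpoly K[n]} -> Prop) (G : seq {mpoly K[n]}) : Prop :=
  [/\ (forall g, g \in G -> I g),
      (forall f, I f -> f != 0 ->
         exists2 g, g \in G & mdivides (lm g) (lm f)),
      (forall g, g \in G -> g != 0 /\ g@_(lm g) = 1) &
      (forall g g' m, g \in G -> g' \in G -> g' != g -> m \in msupp g ->
         ~~ mdivides (lm g') m)].

Definition vR0 (k : nat) : 'cV[int]_(ncols k) :=
  \col_j (if ((k <= j)%N && (j < 2 * k)%N) then 1
          else if ((3 * k <= j)%N && (j < 4 * k)%N) then -1
          else if (nat_of_ord j == 4 * k)%N then 1
          else if (nat_of_ord j == (4 * k).+1)%N then -1
          else 0).
Definition vRe (k : nat) (i : 'I_k) : 'cV[int]_(ncols k) :=
  \col_j (if (nat_of_ord j == i)%N then 1 else if (nat_of_ord j == k + i)%N then -1 else 0).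
Definition vRf (k : nat) (i : 'I_k) : 'cV[int]_(ncols k) :=
  \col_j (if (nat_of_ord j == 2 * k + i)%N then 1 else if (nat_of_ord j == 3 * k + i)%N then -1 else 0).

Definition Rset (k : nat) : seq 'cV[int]_(ncols k) :=
  vR0 k :: [seq vRe i | i <- enum 'I_k] ++ [seq vRf i | i <- enum 'I_k].

(* Main.v *)
Require Import Defs.
From mathcomp Require Import all_boot all_order all_algebra.
From mathcomp Require Import mpoly.
From mathcomp Require Import zify.
Set Implicit Arguments. Unset Strict Implicit. Unset Printing Implicit Defensive.
Import Order.TTheory GRing.Theory Num.Theory.
Local Open Scope ring_scope.


Section Lex.
Variable n : nat.
Implicit Types m : 'X_{1..n}.

Lemma lexltP m m' : reflect (exists i : 'I_n, (m i < m' i)%N /\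
   forall j : 'I_n, (j < i)%N -> m j = m' j) (lexlt m m').
Proof.
apply: (iffP existsP) => [[i /andP[lt /forallP H]]|[i [lt H]]]; exists i.
  by split=> // j ji; apply/eqP/(implyP (H j) ji).
by rewrite lt /=; apply/forallP=> j; apply/implyP=> ji; rewrite H.
Qed.

Lemma lexlt_irr m : ~~ lexlt m m.
Proof. by apply/lexltP=> -[i [lt _]]; rewrite ltnn in lt. Qed.

Lemma lexlt0 m : ~~ lexlt m 0%MM.
Proof. by apply/lexltP=> -[i [lt _]]; rewrite mnm0E in lt. Qed.

Lemma lexlt_trans m1 m2 m3 : lexlt m1 m2 -> lexlt m2 m3 -> lexlt m1 m3.
Proof.
move=> /lexltP[i [lt1 H1]] /lexltP[j [lt2 H2]]; apply/lexltP.
case: (ltngtP i j) => [ij|ji|ij].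
- exists i; split; first by rewrite -(H2 i ij).
  by move=> l li; rewrite H1 // H2 // (ltn_trans li ij).
- exists j; split; first by rewrite H1.
  by move=> l lj; rewrite H1 ?H2 // (ltn_trans lj ji).
- have eij : i = j by apply/val_inj.
  subst j; exists i; split; first exact: ltn_trans lt2.
  by move=> l li; rewrite H1 ?H2.
Qed.

Lemma lexlt_total m m' : m != m' -> lexlt m m' || lexlt m' m.
Proof.
move=> ne.
case: (boolP [exists j, m j != m' j]) => [/existsP[j0 Hj0]|/existsPn H]; last first.
  by case/eqP: ne; apply/mnmP => j; apply/eqP; move: (H j); rewrite negbK.
case: (@arg_minnP _ j0 (fun j => m j != m' j) (fun j : 'I_n => val j) Hj0) => j Hj Hmin.
have Hl : forall l : 'I_n, (l < j)%N -> m l = m' l.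
  move=> l lj; apply/eqP; apply/negP => /negP Hl.
  by move: (Hmin l Hl); rewrite leqNgt lj.
case: (ltngtP (m j) (m' j)) => [lt|gt|eq].
- by apply/orP; left; apply/lexltP; exists j.
- by apply/orP; right; apply/lexltP; exists j; split=> // l lj; rewrite Hl.
- by rewrite eq eqxx in Hj.
Qed.

Lemma foldr_lexmax_spec (s : seq 'X_{1..n}) :
  ((foldr (@lexmax n) 0%MM s \in s) || (s == [::])) /\
  (forall x, x \in s -> x = foldr (@lexmax n) 0%MM s \/ lexlt x (foldr (@lexmax n) 0%MM s)).
Proof.
elim: s => [|x s [IH1 IH2]] //=; move: IH1 IH2; set M := foldr _ _ s => IH1 IH2.
rewrite /lexmax; case H: (lexlt x M).
- split.
    case/orP: IH1 => [Ms|/eqP E]; first by rewrite in_cons Ms orbT.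
    by move: H; rewrite /M E /= (negbTE (lexlt0 _)).
  by move=> y; rewrite in_cons => /orP[/eqP ->|/IH2]; [right|].
- split; first by rewrite in_cons eqxx.
  move=> y; rewrite in_cons => /orP[/eqP ->|/IH2 Hy]; first by left.
  case: (eqVneq x M) => [E|ne]; first by rewrite E.
  have HM : lexlt M x by move: (lexlt_total ne); rewrite H.
  by right; case: Hy => [->|Hy] //; apply: lexlt_trans Hy HM.
Qed.

Variable K : fieldType.
Implicit Types p : {mpoly K[n]}.

Lemma lm_in p : p != 0 -> lm p \in msupp p.
Proof.
move=> pn0; case: (foldr_lexmax_spec (msupp p)) => /orP[] // /eqP E _.
by case/eqP: pn0; rewrite (mpolyE p) E big_nil.
Qed.

Lemma lm_max p m : m \in msupp p -> m = lm p \/ lexlt m (lm p).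
Proof. by case: (foldr_lexmax_spec (msupp p)) => _; apply. Qed.

Lemma lm_eq p m0 : m0 \in msupp p ->
  (forall m, m \in msupp p -> m = m0 \/ lexlt m m0) -> lm p = m0.
Proof.
move=> m0in H.
have pn0 : p != 0 by apply/eqP=> E; move: m0in; rewrite E mcoeff_msupp mcoeff0 eqxx.
case: (H _ (lm_in pn0)) => // lt1.
case: (lm_max m0in) => // lt2.
by move: (lexlt_irr m0); rewrite (lexlt_trans lt2 lt1).
Qed.

Section Lf.
Variable P : 'X_{1..n} -> bool.
Definition Lf p : K := \sum_(m <- msupp p) p@_m * (P m)%:R.

Lemma Lf_sup p S : uniq S -> {subset msupp p <= S} ->
  Lf p = \sum_(m <- S) p@_m * (P m)%:R.
Proof.
move=> uS sub; rewrite (bigID (fun m => m \in msupp p)) /=.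
rewrite [X in _ + X]big1 ?addr0; last first.
  by move=> m /memN_msupp_eq0 ->; rewrite mul0r.
rewrite -big_filter /Lf; apply: perm_big; apply: uniq_perm.
- exact: msupp_uniq.
- exact: filter_uniq.
by move=> m; rewrite mem_filter; case: (boolP (m \in msupp p)) => // /sub ->.
Qed.

Lemma Lf_add p q : Lf (p + q) = Lf p + Lf q.
Proof.
set S := undup (msupp p ++ msupp q).
have uS : uniq S by apply: undup_uniq.
rewrite (Lf_sup (p := p) uS) ?(Lf_sup (p := q) uS) ?(Lf_sup (p := p + q) uS).
- by rewrite -big_split /=; apply: eq_bigr => m _; rewrite mcoeffD mulrDl.
- by move=> m /msuppD_le; rewrite mem_undup.
- by move=> m mi; rewrite mem_undup mem_cat mi orbT.
- by move=> m mi; rewrite mem_undup mem_cat mi.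
Qed.

Lemma Lf_sub p q : Lf (p - q) = Lf p - Lf q.
Proof.
set S := undup (msupp p ++ msupp q).
have uS : uniq S by apply: undup_uniq.
rewrite (Lf_sup (p := p) uS) ?(Lf_sup (p := q) uS) ?(Lf_sup (p := p - q) uS).
- by rewrite -sumrB /=; apply: eq_bigr => m _; rewrite mcoeffB mulrBl.
- by move=> m /msuppB_le; rewrite mem_undup.
- by move=> m mi; rewrite mem_undup mem_cat mi orbT.
- by move=> m mi; rewrite mem_undup mem_cat mi.
Qed.

Lemma Lf0 : Lf 0 = 0.
Proof.
rewrite (Lf_sup (S := [::])) ?big_nil //.
by move=> m; rewrite mcoeff_msupp mcoeff0 eqxx.
Qed.

Lemma Lf_sum (I : Type) (s : seq I) (F : I -> {mpoly K[n]}) :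
  Lf (\sum_(i <- s) F i) = \sum_(i <- s) Lf (F i).
Proof.
elim: s => [|x s IH]; first by rewrite !big_nil Lf0.
by rewrite !big_cons Lf_add IH.
Qed.

Lemma Lf_scaleX c m : Lf (c *: 'X_[m]) = c * (P m)%:R.
Proof.
rewrite (Lf_sup (S := [:: m])) ?big_seq1 ?mcoeffZ ?mcoeffX ?eqxx ?mulr1 //.
move=> m'; rewrite mcoeff_msupp mcoeffZ mcoeffX inE.
case: (eqVneq m m') => [E|ne]; first by subst m'; move=> _; apply/eqP.
by rewrite mulr0 eqxx.
Qed.

Lemma Lf_mulX h a : Lf (h * 'X_[a]) =
  \sum_(mu <- msupp h) h@_mu * (P (mu + a)%MM)%:R.
Proof.
have -> : h * 'X_[a] = \sum_(mu <- msupp h) h@_mu *: 'X_[mu + a].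
  rewrite {1}(mpolyE h) mulr_suml; apply: eq_bigr => mu _.
  by rewrite -scalerAl mpolyXD.
by rewrite Lf_sum; apply: eq_bigr => mu _; rewrite Lf_scaleX.
Qed.
End Lf.
End Lex.



Section Conc.
Variable k : nat.
Hypothesis hk : (1 <= k)%N.
Local Notation N := (ncols k).
Implicit Types m a b : 'X_{1..N}.

Definition mat m (j : nat) : nat := m (inord j).
Lemma matE m (j : 'I_N) : mat m j = m j.
Proof. by rewrite /mat inord_val. Qed.
Lemma mat_add m1 m2 j : mat (m1 + m2)%MM j = (mat m1 j + mat m2 j)%N.
Proof. by rewrite /mat mnmDE. Qed.

Definition ee m := mat m (4*k).
Definition ff m := mat m (4*k).+1.
Definition YY m i := (mat m i + mat m (k + i))%N.
Definition WW m i := (mat m (2*k + i) + mat m (3*k + i))%N.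
Definition sp m := (\max_(i < k) (ee m - YY m i))%N.
Definition qq m := (ee m - sp m)%N.
Definition Phi m : 'X_{1..N} :=
  [multinom (if (j < k)%N then 0%N
             else if (j < 2*k)%N then (YY m (j - k) - qq m)%N
             else if (j < 3*k)%N then 0%N
             else if (j < 4*k)%N then (WW m (j - 3*k) + qq m)%N
             else if (nat_of_ord j == 4*k)%N then (ee m - qq m)%N
             else (ff m + qq m)%N) | j < N].

Definition Aeq a b :=
  [/\ forall i, (i < k)%N -> (YY a i + ee b = YY b i + ee a)%N,
      forall i, (i < k)%N -> (WW a i + ff b = WW b i + ff a)%N &
      (ee a + ff a = ee b + ff b)%N].

Lemma sp_le m : (sp m <= ee m)%N.
Proof. by apply/bigmax_leqP => i _; apply: leq_subr. Qed.
Lemma sp_ge m i : (i < k)%N -> (ee m - YY m i <= sp m)%N.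
Proof. by move=> hi; apply: (leq_bigmax (F := fun i : 'I_k => ee m - YY m i)%N (Ordinal hi)). Qed.

Lemma Phi_inv a b : Aeq a b -> Phi a = Phi b.
Proof.
case=> HY HW Hef.
have spE : sp a = sp b.
  by apply: eq_bigr => i _; move: (HY i (ltn_ord i)); lia.
have la := sp_le a; have lb := sp_le b.
apply/mnmP => j; rewrite !mnmE /qq.
case: ifP => // j1; case: ifP => j2.
  have hi : (j - k < k)%N by lia.
  move: (HY _ hi) (sp_ge a hi) (sp_ge b hi); lia.
case: ifP => // j3; case: ifP => j4.
  have hi : (j - 3*k < k)%N by lia.
  move: (HW _ hi); lia.
case: ifP => _; lia.
Qed.

Lemma Phi_std m : (forall i, (i < k)%N -> mat m i = 0%N) ->
  (forall i, (i < k)%N -> mat m (2*k + i) = 0%N) -> qq m = 0%N -> Phi m = m.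
Proof.
move=> Hx Hz q0; apply/mnmP => j; rewrite mnmE -[m j]matE q0 /YY /WW /ee /ff.
have jlt : (j < (4*k).+2)%N := ltn_ord j.
case: ifP => j1; first by rewrite Hx.
case: ifP => j2.
  rewrite Hx; last lia.
  have -> : (k + (j - k) = j)%N by lia.
  by rewrite add0n subn0.
case: ifP => j3.
  have -> : (nat_of_ord j = 2*k + (j - 2*k))%N by lia.
  by rewrite Hz //; lia.
case: ifP => j4.
  rewrite Hz; last lia.
  have -> : (3*k + (j - 3*k) = j)%N by lia.
  by rewrite add0n addn0.
case: ifP => /eqP j5; first by rewrite j5 subn0.
have -> : (nat_of_ord j = (4*k).+1)%N by lia.
by rewrite addn0.
Qed.

Lemma Phi_le m : Phi m = m \/ lexlt (Phi m) m.
Proof.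
case: (boolP [exists i : 'I_k, mat m i != 0%N]) => [Hx|Hx].
  have exP : exists i, (i < k)%N && (mat m i != 0%N).
    by case/existsP: Hx => i Hi; exists i; rewrite ltn_ord.
  case: (ex_minnP exP) => i0 /andP[i0k nz] Hmin.
  right; apply/lexltP.
  have hi : (i0 < N)%N by rewrite /ncols; lia.
  exists (Ordinal hi); split.
    by rewrite mnmE -matE /= i0k lt0n.
  move=> l /= lt; rewrite mnmE -matE.
  have lk : (l < k)%N by lia.
  rewrite lk; have [E|nz'] := eqVneq (mat m l) 0%N; first by rewrite E.
  by move: (Hmin l); rewrite lk nz' => /(_ isT); lia.
have {}Hx : forall i, (i < k)%N -> mat m i = 0%N.
  move=> i ik; apply/eqP; move/existsPn: Hx => /(_ (Ordinal ik)).
  by rewrite negbK.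
case: (posnP (qq m)) => [q0|qpos]; last first.
  right; apply/lexltP.
  have hi : (k < N)%N by rewrite /ncols; lia.
  exists (Ordinal hi); split.
    rewrite mnmE -matE /= ltnn.
    have -> : (k < 2 * k)%N by lia.
    rewrite subnn /YY addn0 Hx //.
    move: (sp_ge m hk) qpos; rewrite /qq /YY addn0 Hx //; lia.
  move=> l /= lt; rewrite mnmE -matE lt Hx //.
case: (boolP [exists i : 'I_k, mat m (2*k + i) != 0%N]) => [Hz|Hz]; last first.
  left; apply: Phi_std => // i ik; apply/eqP.
  by move/existsPn: Hz => /(_ (Ordinal ik)); rewrite negbK.
have exP : exists i, (i < k)%N && (mat m (2*k + i) != 0%N).
  by case/existsP: Hz => i Hi; exists i; rewrite ltn_ord.
case: (ex_minnP exP) => i0 /andP[i0k nz] Hmin.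
right; apply/lexltP.
have hi : (2*k + i0 < N)%N by rewrite /ncols; lia.
exists (Ordinal hi); split.
  rewrite mnmE -matE /=.
  have -> : (2 * k + i0 < k)%N = false by lia.
  have -> : (2 * k + i0 < 2 * k)%N = false by lia.
  have -> : (2 * k + i0 < 3 * k)%N by lia.
  by rewrite lt0n.
move=> l /= lt; rewrite mnmE -matE.
case: ifP => l1; first by rewrite Hx.
case: ifP => l2.
  rewrite /YY Hx; last lia.
  have -> : (k + (l - k) = l)%N by lia.
  by rewrite q0 subn0.
have -> : (l < 3 * k)%N by lia.
have -> : (nat_of_ord l = 2*k + (l - 2*k))%N by lia.
have [E|nz'] := eqVneq (mat m (2*k + (l - 2*k))) 0%N; first by rewrite E.
by move: (Hmin (l - 2*k)%N); rewrite nz' andbT => /(_ ltac:(lia)); lia.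
Qed.

End Conc.



Section Conc3.
Variable k : nat.
Hypothesis hk : (1 <= k)%N.
Local Notation N := (ncols k).

Definition uat (u : 'cV[int]_N) (j : nat) : int := u (inord j) ord0.

Lemma uat_split u j : uat u j = (mat (upos u) j)%:Z - (mat (uneg u) j)%:Z.
Proof.
rewrite /uat /mat /upos /uneg !mnmE.
case: (u _ _) => [[|n]|n] //=; rewrite ?subr0 ?NegzE ?sub0r //.
Qed.

Lemma modk4 j r : (r < k)%N -> (j < 4*k)%N ->
  ((j %% k == r) = [|| j == r, j == k + r, j == 2*k + r | j == 3*k+r])%N.
Proof.
move=> rk jk.
have e := divn_eq j k. have lt := ltn_pmod j hk.
have : (j %/ k < 4)%N by rewrite ltn_divLR //; lia.
move: (j %/ k)%N (j %% k)%N e lt => q r' e lt.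
case: q e => [|[|[|[|q]]]] e _ //; rewrite e; apply/idP/idP; lia.
Qed.

Lemma sum3 (F : 'I_N -> int) (a b c : 'I_N) : a != b -> a != c -> b != c ->
  (forall j, j != a -> j != b -> j != c -> F j = 0) -> \sum_j F j = F a + F b + F c.
Proof.
move=> ab ac bc H.
rewrite (bigD1 a) // (bigD1 b) /=; last by rewrite eq_sym.
rewrite (bigD1 c) /=; last by rewrite eq_sym ac eq_sym bc.
rewrite big1 ?addr0 ?addrA // => j /andP[/andP[ja jb] jc]; exact: H.
Qed.

Lemma sum2 (F : 'I_N -> int) (a b : 'I_N) : a != b ->
  (forall j, j != a -> j != b -> F j = 0) -> \sum_j F j = F a + F b.
Proof.
move=> ab H.
rewrite (bigD1 a) // (bigD1 b) /=; last by rewrite eq_sym.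
rewrite big1 ?addr0 ?addrA // => j /andP[ja jb]; exact: H.
Qed.

Lemma inord_neq i j : (i < N)%N -> (j < N)%N -> i != j -> (inord i : 'I_N) != inord j.
Proof. by move=> hi hj ne; apply/eqP => /(congr1 val) /=; rewrite !inordK //; apply/eqP. Qed.

Lemma neq_inord (j : 'I_N) i : (i < N)%N -> j != inord i -> nat_of_ord j != i.
Proof. by move=> hi; apply: contra => /eqP E; apply/eqP/val_inj; rewrite /= inordK. Qed.

End Conc3.



Ltac ent := repeat (first [ progress (case: ifP; intro) | match goal with H : context[if _ then _ else _] |- _ => revert H end ]); intros; rewrite ?(subr0, sub0r, subrr, mul1r, mul0r, mulN1r, add0r, addr0); repeat match goal with H : context[(_ %% _ == _)%N] |- _ => rewrite modk4 in H; [|lia|lia|lia] end; first [done | by exfalso; lia | lia].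

Section Conc4.
Variable k : nat.
Hypothesis hk : (1 <= k)%N.
Local Notation N := (ncols k).

Lemma Aent (r j : nat) : (r < (2*k).+1)%N -> (j < N)%N ->
  Amat k (inord r) (inord j) =
   (if (r < k)%N then (if (j == r)%N || (j == k + r)%N then 1 else 0) - (if (j == 4*k)%N then 1 else 0)
    else if (r < 2*k)%N then (if (j == k + r)%N || (j == 2*k + r)%N then 1 else 0) - (if (j == (4*k).+1)%N then 1 else 0)
    else if (j == 4*k)%N || (j == (4*k).+1)%N then 1 else 0).
Proof. move=> hr hj; rewrite !mxE !inordK //; move: hj; rewrite /ncols => hj; ent. Qed.

End Conc4.

Section Conc5.
Variable k : nat.
Hypothesis hk : (1 <= k)%N.
Local Notation N := (ncols k).

Lemma A0 (i : nat) (j : 'I_N) : (i < (2*k).+1)%N ->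
  (Amat k (inord i) j = let j := nat_of_ord j in if (i < k)%N then (if (j == i)%N || (j == k + i)%N then 1 else 0) - (if (j == 4*k)%N then 1 else 0)
    else if (i < 2*k)%N then (if (j == k + i)%N || (j == 2*k + i)%N then 1 else 0) - (if (j == (4*k).+1)%N then 1 else 0)
    else if (j == 4*k)%N || (j == (4*k).+1)%N then 1 else 0).
Proof. by move=> hi; rewrite -[j]inord_val Aent // inordK. Qed.

Lemma A_x (u : 'cV[int]_N) i : (i < k)%N ->
  (Amat k *m u) (inord i) ord0 = uat u i + uat u (k+i) - uat u (4*k).
Proof.
move=> ik.
have hN : forall j, (j < (4*k).+2)%N -> (j < N)%N by [].
rewrite mxE (@sum3 _ _ (inord i) (inord (k+i)) (inord (4*k))).
- rewrite !A0; try lia; rewrite !inordK; try (rewrite /ncols; lia).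
  by rewrite /uat; ent.
- by apply: inord_neq; rewrite /ncols; lia.
- by apply: inord_neq; rewrite /ncols; lia.
- by apply: inord_neq; rewrite /ncols; lia.
- move=> j ja jb jc.
  have ja' := neq_inord (hN i ltac:(lia)) ja.
  have jb' := neq_inord (hN (k+i)%N ltac:(lia)) jb.
  have jc' := neq_inord (hN (4*k)%N ltac:(lia)) jc.
  have jN : (j < (4*k).+2)%N := ltn_ord j.
  rewrite A0; last lia.
  by cbv zeta; ent.
Qed.
Lemma A_z (u : 'cV[int]_N) i : (i < k)%N ->
  (Amat k *m u) (inord (k+i)) ord0 = uat u (2*k+i) + uat u (3*k+i) - uat u (4*k).+1.
Proof.
move=> ik.
have hN : forall j, (j < (4*k).+2)%N -> (j < N)%N by [].
rewrite mxE (@sum3 _ _ (inord (2*k+i)) (inord (3*k+i)) (inord (4*k).+1)).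
- rewrite !A0; try lia; rewrite !inordK; try (rewrite /ncols; lia).
  by rewrite /uat; ent.
- by apply: inord_neq; rewrite /ncols; lia.
- by apply: inord_neq; rewrite /ncols; lia.
- by apply: inord_neq; rewrite /ncols; lia.
- move=> j ja jb jc.
  have ja' := neq_inord (hN (2*k+i)%N ltac:(lia)) ja.
  have jb' := neq_inord (hN (3*k+i)%N ltac:(lia)) jb.
  have jc' := neq_inord (hN (4*k).+1 ltac:(lia)) jc.
  have jN : (j < (4*k).+2)%N := ltn_ord j.
  rewrite A0; last lia.
  by cbv zeta; ent.
Qed.
Lemma A_s (u : 'cV[int]_N) :
  (Amat k *m u) (inord (2*k)) ord0 = uat u (4*k) + uat u (4*k).+1.
Proof.
have hN : forall j, (j < (4*k).+2)%N -> (j < N)%N by [].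
rewrite mxE (@sum2 _ _ (inord (4*k)) (inord (4*k).+1)).
- rewrite !A0; try lia; rewrite !inordK; try (rewrite /ncols; lia).
  by rewrite /uat; ent.
- by apply: inord_neq; rewrite /ncols; lia.
- move=> j ja jb.
  have ja' := neq_inord (hN (4*k)%N ltac:(lia)) ja.
  have jb' := neq_inord (hN (4*k).+1 ltac:(lia)) jb.
  have jN : (j < (4*k).+2)%N := ltn_ord j.
  rewrite A0; last lia.
  by cbv zeta; ent.
Qed.
End Conc5.




Section Binom.
Variables (K : fieldType) (n : nat).
Lemma binom_coef (u : 'cV[int]_n) m : (binom K u)@_m = (upos u == m)%:R - (uneg u == m)%:R.
Proof. by rewrite /binom mcoeffB !mcoeffX. Qed.
Lemma binom_supp (u : 'cV[int]_n) m : m \in msupp (binom K u) -> m = upos u \/ m = uneg u.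
Proof.
rewrite mcoeff_msupp binom_coef.
case: (eqVneq (upos u) m) => [->|_]; first by left.
case: (eqVneq (uneg u) m) => [->|_]; first by right.
by rewrite subrr eqxx.
Qed.
Lemma lm_binom (u : 'cV[int]_n) : lexlt (uneg u) (upos u) ->
  [/\ lm (binom K u) = upos u, (binom K u)@_(upos u) = 1 & binom K u != 0].
Proof.
move=> lt.
have ne : uneg u != upos u by apply: contraNneq (lexlt_irr (uneg u)) => E; rewrite {2}E.
have c1 : (binom K u)@_(upos u) = 1 by rewrite binom_coef eqxx (negbTE ne) subr0.
have nz : binom K u != 0 by apply/eqP => E; move: c1; rewrite E mcoeff0 => /eqP; rewrite eq_sym oner_eq0.
split => //; apply: lm_eq.
  by rewrite mcoeff_msupp c1 oner_neq0.
by move=> m /binom_supp [->|->]; [left|right].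
Qed.
End Binom.

Section Conc6.
Variable k : nat.
Hypothesis hk : (1 <= k)%N.
Local Notation N := (ncols k).
Implicit Types m a b : 'X_{1..N}.

Lemma Aeq_ker (u : 'cV[int]_N) : Amat k *m u = 0 -> Aeq (upos u) (uneg u).
Proof.
move=> H.
have E : forall r, (Amat k *m u) r ord0 = 0 by move=> r; rewrite H mxE.
split.
- move=> i ik; move: (E (inord i)); rewrite A_x // !uat_split /YY /ee; lia.
- move=> i ik; move: (E (inord (k+i))); rewrite A_z // !uat_split /WW /ff; lia.
- move: (E (inord (2*k))); rewrite A_s // !uat_split /ee /ff; lia.
Qed.

Lemma Aeq_add mu a b : Aeq a b -> Aeq (mu + a)%MM (mu + b)%MM.
Proof.
case=> H1 H2 H3; split.
- move=> i ik; move: (H1 i ik); rewrite /YY /ee !mat_add; lia.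
- move=> i ik; move: (H2 i ik); rewrite /WW /ff !mat_add; lia.
- move: H3; rewrite /ee /ff !mat_add; lia.
Qed.

Lemma matpos (u : 'cV[int]_N) j : mat (upos u) j = if 0 <= uat u j then absz (uat u j) else 0%N.
Proof. by rewrite /mat /upos mnmE. Qed.
Lemma matneg (u : 'cV[int]_N) j : mat (uneg u) j = if uat u j <= 0 then absz (uat u j) else 0%N.
Proof. by rewrite /mat /uneg mnmE. Qed.

Lemma vR0E j : (j < (4*k).+2)%N -> uat (vR0 k) j =
  (if ((k <= j)%N && (j < 2 * k)%N) then 1
          else if ((3 * k <= j)%N && (j < 4 * k)%N) then -1
          else if (j == 4 * k)%N then 1
          else if (j == (4 * k).+1)%N then -1
          else 0).
Proof. by move=> hj; rewrite /uat mxE inordK. Qed.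
Lemma vReE (i : 'I_k) j : (j < (4*k).+2)%N -> uat (vRe i) j =
  (if (j == i)%N then 1 else if (j == k + i)%N then -1 else 0).
Proof. by move=> hj; rewrite /uat mxE inordK. Qed.
Lemma vRfE (i : 'I_k) j : (j < (4*k).+2)%N -> uat (vRf i) j =
  (if (j == 2 * k + i)%N then 1 else if (j == 3 * k + i)%N then -1 else 0).
Proof. by move=> hj; rewrite /uat mxE inordK. Qed.


Lemma lex_vR0 : lexlt (uneg (vR0 k)) (upos (vR0 k)).
Proof.
apply/lexltP; have hi : (k < N)%N by rewrite /ncols; lia.
exists (Ordinal hi); split.
  by rewrite -!matE /= matpos matneg vR0E; [ent|lia].
move=> l /= lt; have lN : (l < (4*k).+2)%N := ltn_ord l.
by rewrite -!matE matpos matneg vR0E //; ent.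
Qed.

Lemma lex_vRe (i : 'I_k) : lexlt (uneg (vRe i)) (upos (vRe i)).
Proof.
apply/lexltP; have ik := ltn_ord i; have hi : (i < N)%N by rewrite /ncols; lia.
exists (Ordinal hi); split.
  by rewrite -!matE /= matpos matneg vReE; [ent|lia].
move=> l /= lt; have lN : (l < (4*k).+2)%N := ltn_ord l.
by rewrite -!matE matpos matneg vReE //; ent.
Qed.

Lemma lex_vRf (i : 'I_k) : lexlt (uneg (vRf i)) (upos (vRf i)).
Proof.
apply/lexltP; have ik := ltn_ord i; have hi : (2*k + i < N)%N by rewrite /ncols; lia.
exists (Ordinal hi); split.
  by rewrite -!matE /= matpos matneg vRfE; [ent|lia].
move=> l /= lt; have lN : (l < (4*k).+2)%N := ltn_ord l.
by rewrite -!matE matpos matneg vRfE //; ent.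
Qed.

Lemma ndiv (u : 'cV[int]_N) m (j : 'I_N) :
  mat (upos u) j = 1%N -> mat m j = 0%N -> ~~ mdivides (upos u) m.
Proof.
move=> h1 h2; apply/forallP => /(_ j); rewrite -!matE h1 h2 //.
Qed.

Lemma zero_both (u : 'cV[int]_N) j : uat u j = 0 ->
  mat (upos u) j = 0%N /\ mat (uneg u) j = 0%N.
Proof. by move=> h; rewrite matpos matneg h. Qed.

Lemma ndivx m i (ik : (i < k)%N) : ~~ mdivides (upos (vRe (Ordinal ik))) m -> mat m i = 0%N.
Proof.
move/forallPn => [j]; rewrite -ltnNge -!matE matpos vReE /=; last exact: ltn_ord.
have jN : (j < (4*k).+2)%N := ltn_ord j.
move=> Hj; suff: (nat_of_ord j = i) /\ mat m j = 0%N by case=> <-.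
by move: Hj; ent.
Qed.

Lemma ndivz m i (ik : (i < k)%N) : ~~ mdivides (upos (vRf (Ordinal ik))) m -> mat m (2*k+i) = 0%N.
Proof.
move/forallPn => [j]; rewrite -ltnNge -!matE matpos vRfE /=; last exact: ltn_ord.
have jN : (j < (4*k).+2)%N := ltn_ord j.
move=> Hj; suff: (nat_of_ord j = 2*k+i)%N /\ mat m j = 0%N by case=> <-.
by move: Hj; ent.
Qed.

Lemma ndiv0 m : (forall i, (i < k)%N -> mat m i = 0%N) ->
  ~~ mdivides (upos (vR0 k)) m -> qq m = 0%N.
Proof.
move=> Hx /forallPn => [[j]]; rewrite -ltnNge -!matE matpos vR0E /=; last exact: ltn_ord.
have jN : (j < (4*k).+2)%N := ltn_ord j.
move=> Hj.
have : ((k <= j < 2*k)%N /\ mat m j = 0%N) \/ (nat_of_ord j = 4*k /\ mat m j = 0%N)%N.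
  by move: Hj; ent.
case=> [[jr mj]|[je mj]].
  have ik : (j - k < k)%N by lia.
  move: (sp_ge m ik); rewrite /qq /YY Hx //.
  have -> : (k + (j - k) = j)%N by lia.
  by rewrite mj; lia.
by rewrite /qq /ee -je mj.
Qed.
End Conc6.




Lemma Rset_cases k (u : 'cV[int]_(ncols k)) : u \in Rset k ->
  u = vR0 k \/ (exists i : 'I_k, u = vRe i) \/ (exists i : 'I_k, u = vRf i).
Proof.
rewrite /Rset in_cons mem_cat => /orP[/eqP->|/orP[/mapP[i _ ->]|/mapP[i _ ->]]].
- by left.
- by right; left; exists i.
- by right; right; exists i.
Qed.

Lemma vR0_in k : vR0 k \in Rset k.
Proof. by rewrite /Rset in_cons eqxx. Qed.
Lemma vRe_in k (i : 'I_k) : vRe i \in Rset k.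
Proof. by rewrite /Rset in_cons mem_cat (map_f (fun i => vRe i)) ?orbT // mem_enum. Qed.
Lemma vRf_in k (i : 'I_k) : vRf i \in Rset k.
Proof. by rewrite /Rset in_cons mem_cat (map_f (fun i => vRf i)) ?orbT // mem_enum. Qed.

Lemma ker_R k (hk : (1 <= k)%N) (u : 'cV[int]_(ncols k)) : u \in Rset k -> Amat k *m u = 0.
Proof.
move=> uR; apply/matrixP => r c; rewrite [X in _ = X]mxE [c]ord1 -[r]inord_val.
have rN : (r < (2*k).+1)%N := ltn_ord r.
case: (ltnP r k) => r1.
  rewrite A_x //.
  case/Rset_cases: uR => [->|[[i ->]|[i ->]]]; [|move: (ltn_ord i) => ?..];
    rewrite ?vR0E ?vReE ?vRfE; try lia; ent.
case: (ltnP r (2*k)) => r2.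
  have -> : nat_of_ord r = (k + (r - k))%N by lia.
  rewrite A_z //; last lia.
  case/Rset_cases: uR => [->|[[i ->]|[i ->]]]; [|move: (ltn_ord i) => ?..];
    rewrite ?vR0E ?vReE ?vRfE; try lia; ent.
have -> : nat_of_ord r = (2*k)%N by lia.
rewrite A_s //.
case/Rset_cases: uR => [->|[[i ->]|[i ->]]]; [|move: (ltn_ord i) => ?..];
  rewrite ?vR0E ?vReE ?vRfE; try lia; ent.
Qed.

Theorem theorem3 (K : fieldType) (k : nat) (hk : (1 <= k)%N) :
  is_reduced_lex_GB (@toric_ideal K _ _ (Amat k))
    [seq @binom K _ u | u <- Rset k].
Proof.
have lexR : forall u, u \in Rset k -> lexlt (uneg u) (upos u).
  move=> u /Rset_cases [->|[[i ->]|[i ->]]];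
    [exact: lex_vR0 | exact: lex_vRe | exact: lex_vRf].
split.
- move=> g /mapP[u uR ->]; exists [:: (1, u)]; split.
    by move=> p; rewrite inE => /eqP -> /=; apply: ker_R.
  by rewrite big_seq1 mul1r.
- move=> f [s [Hs fE]] fn0.
  set m := lm f.
  case: (boolP (has (fun g => mdivides (lm g) m) [seq binom K u | u <- Rset k]))
    => [/hasP[g gin gd]|/hasPn H]; first by exists g.
  exfalso.
  have Hg : forall u, u \in Rset k -> ~~ mdivides (upos u) m.
    move=> u uR; have := H (binom K u) (map_f _ uR).
    by case: (lm_binom K (lexR u uR)) => ->.
  have Hx : forall i, (i < k)%N -> mat m i = 0%N.
    by move=> i ik; apply: (@ndivx k hk m i ik); apply: Hg; apply: vRe_in.
  have Hz : forall i, (i < k)%N -> mat m (2*k + i) = 0%N.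
    by move=> i ik; apply: (@ndivz k hk m i ik); apply: Hg; apply: vRf_in.
  have q0 := ndiv0 hk Hx (Hg _ (vR0_in k)).
  have Pm : Phi m = m := Phi_std hk Hx Hz q0.
  have mf : m \in msupp f := lm_in fn0.
  have L1 : Lf (fun a => Phi a == m) f = f@_m.
    rewrite /Lf (bigD1_seq m) ?msupp_uniq //= Pm eqxx mulr1.
    rewrite big_seq_cond big1 ?addr0 // => a /andP[ain ne].
    case: (lm_max ain) => [E|lt]; first by move: ne; rewrite E eqxx.
    have : Phi a != m.
      case: (Phi_le hk a) => [->|lt2] //.
      apply/eqP => E; move: (lexlt_trans lt2 lt); rewrite E.
      by rewrite (negbTE (lexlt_irr _)).
    by move/negbTE ->; rewrite mulr0.
  have L2 : Lf (fun a => Phi a == m) f = 0.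
    rewrite fE Lf_sum big_seq big1 // => p pin.
    rewrite /binom mulrBr Lf_sub !Lf_mulX -sumrB big1 // => mu _.
    by rewrite (Phi_inv hk (Aeq_add hk mu (Aeq_ker hk (Hs p pin)))) subrr.
  by move: mf; rewrite mcoeff_msupp -L1 L2 eqxx.
- move=> g /mapP[u uR ->].
  by case: (lm_binom K (lexR u uR)) => -> ->.
- move=> g g' m' /mapP[u uR ->] /mapP[u' uR' ->] neq min.
  case: (lm_binom K (lexR u' uR')) => -> _ _.
  have Hm : forall j, uat u j = 0 -> mat m' j = 0%N.
    move=> j h; case: (zero_both h) => h1 h2.
    by case: (binom_supp min) => ->.
  case/Rset_cases: uR' neq => [->|[[i' ->]|[i' ->]]] neq.
  + have jN : (4*k < ncols k)%N by rewrite /ncols; lia.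
    apply: (@ndiv _ _ _ (Ordinal jN)) => /=.
      by rewrite matpos vR0E; [ent|lia].
    apply: Hm.
    case/Rset_cases: uR neq => [->|[[i ->]|[i ->]]] neq; first by rewrite eqxx in neq.
      by move: (ltn_ord i) => ?; rewrite vReE; [ent|lia].
    by move: (ltn_ord i) => ?; rewrite vRfE; [ent|lia].
  + move: (ltn_ord i') => ?.
    have jN : (i' < ncols k)%N by rewrite /ncols; lia.
    apply: (@ndiv _ _ _ (Ordinal jN)) => /=.
      by rewrite matpos vReE; [ent|lia].
    apply: Hm.
    case/Rset_cases: uR neq => [->|[[i ->]|[i ->]]] neq.
    * by rewrite vR0E; [ent|lia].
    * have ne : nat_of_ord i != nat_of_ord i'.
        by apply: contraNneq neq => /val_inj ->.
      by move: (ltn_ord i) => ?; rewrite vReE; [ent|lia].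
    * by move: (ltn_ord i) => ?; rewrite vRfE; [ent|lia].
  + move: (ltn_ord i') => ?.
    have jN : (2*k + i' < ncols k)%N by rewrite /ncols; lia.
    apply: (@ndiv _ _ _ (Ordinal jN)) => /=.
      by rewrite matpos vRfE; [ent|lia].
    apply: Hm.
    case/Rset_cases: uR neq => [->|[[i ->]|[i ->]]] neq.
    * by rewrite vR0E; [ent|lia].
    * by move: (ltn_ord i) => ?; rewrite vReE; [ent|lia].
    * have ne : nat_of_ord i != nat_of_ord i'.
        by apply: contraNneq neq => /val_inj ->.
      by move: (ltn_ord i) => ?; rewrite vRfE; [ent|lia].
Qed.
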